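(* Let $N\ge1$. (a) For a proper layered colored planar tree $T$, the breadth-first order $\ll$ coincides with the order $\prec_r$ on the set of non-degenerate vertices of $T$ if and only if $T$ is simple and order reduced (i.e. $T\in\mathbf{OST}$). (b) For every $j\in\langle N\rangle$ and word $u$, the contraction map $\rho$ is a bijection of $\mathbf{OST}_u^j$ onto $\mathbf{RT}_u^j$. (c) If $T\in\mathbf{RT}_u^j$ and $T'$ is the unique tree in $\mathbf{OST}_u^j$ with $\rho(T')=T$, then $\Omega(T')=\Lambda_{\uparrow r}(T)$ and $\ell(T')=\mathbf v(T)$.
   Context: Let $\langle N\rangle=\{1,\dots,N\}$. $\mathcal H^N$ denotes the free unital associative complex algebra on symbols $Y_u^i$ ($i\in\langle N\rangle$, $u$ a word over $\langle N\rangle$ of length $\ge2$), with the convention $Y_j^i=\delta_{ij}1$ for letters $i,j$. Trees: a colored planar tree is a finite rooted tree with linearly ordered children at each vertex and colors $c(x)\in\langle N\rangle$ on vertices such that if $x$ has exactly one child $y$ then $c(y)=c(x)$; trees are up to isomorphism. Root at level $0$, children of level-$k$ vertices at level $k+1$; vertices of a level are ordered left to right (by parents, then among siblings). Leaf: no children; unary: exactly one child; non-degenerate: at least two children. Layered: all leaves on the same level $h$, and $\ell(T)=h$ is the number of layers. Proper: every level $k<h$ contains a non-degenerate vertex. Simple: each level contains at most one non-degenerate vertex. A layered tree is order contractible at a non-degenerate non-root vertex $x$ on level $k$ if its parent $x'$ is unary, no non-degenerate vertex lies to the right of $x$ on level $k$, and no non-degenerate vertex lies to the left of $x'$ on level $k-1$;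 it is order reduced if it is order contractible at no vertex. $\mathbf{OST}_u^j$: proper simple order reduced layered colored planar trees with root colored $j$ and leaves colored (left to right) by $u$. A tree is reduced if it has no unary vertices; $\mathbf{RT}_u^j$: reduced colored planar trees with root colored $j$ and leaves colored (left to right) by $u$. The contraction $\rho(T)$ of a tree $T$ is obtained by contracting every edge from a unary vertex to its child (identifying the two, which have the same color); the non-degenerate vertices of $T$ are thereby identified with the non-leaf vertices of $\rho(T)$. Orders: $x\ll y$ iff $x$ is on a deeper level than $y$, or on the same level and to the left of $y$. $x\prec_r y$ iff $y$ is a proper ancestor of $x$, or, with $z$ the nearest common ancestor of $x,y$, the child of $z$ towards $x$ is to the right of the child of $z$ towards $y$. For a non-leaf $x$ with children $y_1<\dots<y_k$, $Y(x)=Y^{c(x)}_{c(y_1)\cdots c(y_k)}$. $\Omega(T')=\prod Y(x)$ over the non-degenerate vertices of $T'$ in increasing $\ll$ order; $\Lambda_{\uparrow r}(T)=\prod Y(x)$ over the non-leaf vertices of $T$ in increasing $\prec_r$ order; $\mathbf v(T)$ is the number of non-leaf vertices of $T$. *)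

(* Defs.v *)
From mathcomp Require Import all_boot all_order all_algebra.
Set Implicit Arguments. Unset Strict Implicit. Unset Printing Implicit Defensive.
Import GRing.Theory.
Local Open Scope ring_scope.

(* Colored planar rooted trees, as plain planar trees with a nat color at each
   vertex.  Trees "up to isomorphism" = structural equality of this datatype. *)
Inductive ctree : Type := Node of nat & seq ctree.

Definition root_color (t : ctree) : nat := let: Node c _ := t in c.
Definition kids (t : ctree) : seq ctree := let: Node _ ts := t in ts.
Definition leaf0 : ctree := Node 0 [::].

Fixpoint wf_colors (N : nat) (t : ctree) : bool :=
  let: Node c ts := t in
  [&& (1 <= c <= N)%N,
      (if ts is [:: s] then root_color s == c else true)
    & all (wf_colors N) ts].

(* Vertices are addressed by paths from the root: the list of child indices. *)
Fixpoint subtree (t : ctree) (p : seq nat) : option ctree :=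
  match p with
  | [::] => Some t
  | i :: p' => if (i < size (kids t))%N then subtree (nth leaf0 (kids t) i) p'
               else None
  end.

Definition is_vertex (t : ctree) (p : seq nat) : bool :=
  if subtree t p is Some _ then true else false.
Definition nchildren (t : ctree) (p : seq nat) : nat :=
  if subtree t p is Some s then size (kids s) else 0.
Definition is_leaf t p := is_vertex t p && (nchildren t p == 0)%N.
Definition is_unary t p := is_vertex t p && (nchildren t p == 1)%N.
Definition is_nondeg t p := is_vertex t p && (2 <= nchildren t p)%N.
Definition is_nonleaf t p := is_vertex t p && (0 < nchildren t p)%N.

Fixpoint verts (t : ctree) : seq (seq nat) :=
  let: Node _ ts := t in
  [::] :: (fix aux (i : nat) (l : seq ctree) : seq (seq nat) :=
             match l with
             | [::] => [::]
             | s :: l' => map (cons i) (verts s) ++ aux i.+1 l'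
             end) 0 ts.

(* Height = largest level of a vertex; level of a vertex = length of its path. *)
Fixpoint height (t : ctree) : nat :=
  let: Node _ ts := t in
  if ts is [::] then 0 else (foldr maxn 0 (map height ts)).+1.

Fixpoint leaves_word (t : ctree) : seq nat :=
  let: Node c ts := t in
  if ts is [::] then [:: c] else flatten (map leaves_word ts).

(* Left-to-right order among vertices of the same level: lexicographic order
   on paths (parents first, then siblings). *)
Fixpoint lexlt (x y : seq nat) : bool :=
  match x, y with
  | a :: x', b :: y' => if a == b then lexlt x' y' else (a < b)%N
  | _, _ => false
  end.

Definition ll (x y : seq nat) : bool :=
  (size y < size x)%N || ((size x == size y) && lexlt x y).

(* x prec_r y : y is a proper ancestor of x, or at the nearest common ancestor
   the branch towards x is to the right of the branch towards y. *)
Fixpoint precr (x y : seq nat) : bool :=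
  match x, y with
  | _, [::] => x != [::]
  | [::], _ :: _ => false
  | a :: x', b :: y' => if a == b then precr x' y' else (b < a)%N
  end.

Definition tlayered (t : ctree) : Prop :=
  forall p, is_leaf t p -> size p = height t.
Definition nlayers (t : ctree) : nat := height t.

Definition tproper (t : ctree) : Prop :=
  forall k, (k < height t)%N -> exists p, is_nondeg t p /\ size p = k.

Definition tsimple (t : ctree) : Prop :=
  forall x y, is_nondeg t x -> is_nondeg t y -> size x = size y -> x = y.

Definition order_contractible_at (t : ctree) (x : seq nat) : Prop :=
  is_nondeg t x /\
  exists x' i, x = rcons x' i /\ is_unary t x' /\
    (forall y, is_nondeg t y -> size y = size x -> ~~ lexlt x y) /\
    (forall z, is_nondeg t z -> size z = size x' -> ~~ lexlt z x').

Definition order_reduced (t : ctree) : Prop :=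
  forall x, ~ order_contractible_at t x.

Fixpoint treduced (t : ctree) : bool :=
  let: Node _ ts := t in (size ts != 1)%N && all treduced ts.

Definition OST (N j : nat) (u : seq nat) (t : ctree) : Prop :=
  [/\ wf_colors N t, root_color t = j, leaves_word t = u,
      tlayered t /\ tproper t & tsimple t /\ order_reduced t].

Definition RT (N j : nat) (u : seq nat) (t : ctree) : Prop :=
  [/\ wf_colors N t, treduced t, root_color t = j & leaves_word t = u].

Fixpoint rho (t : ctree) : ctree :=
  let: Node c ts := t in
  match ts with
  | [:: s] => rho s
  | _ => Node c (map rho ts)
  end.

(* The generators Y_u^i of H^N, interpreted in an arbitrary ring R through an
   assignment Y, with the convention Y_j^i = delta_ij. *)
Definition Ysym (R : pzRingType) (Y : nat -> seq nat -> R) (i : nat) (u : seq nat) : R :=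
  if u is [:: j] then (i == j)%:R else Y i u.

Definition Yvert (R : pzRingType) (Y : nat -> seq nat -> R) (t : ctree) (p : seq nat) : R :=
  if subtree t p is Some (Node c ts) then Ysym Y c (map root_color ts) else 1.

Definition lle x y := (x == y) || ll x y.
Definition prle x y := (x == y) || precr x y.

Definition Omega (R : pzRingType) (Y : nat -> seq nat -> R) (t : ctree) : R :=
  \prod_(x <- sort lle [seq p <- verts t | is_nondeg t p]) Yvert Y t x.

Definition Lambda_r (R : pzRingType) (Y : nat -> seq nat -> R) (t : ctree) : R :=
  \prod_(x <- sort prle [seq p <- verts t | is_nonleaf t p]) Yvert Y t x.

Definition nvert (t : ctree) : nat := size [seq p <- verts t | is_nonleaf t p].

(* Main.v *)
Require Import Defs.
From HB Require Import structures.
From mathcomp Require Import all_boot all_order all_algebra.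
From mathcomp Require Import zify.
Set Implicit Arguments. Unset Strict Implicit. Unset Printing Implicit Defensive.

Section Ind.
Variable P : ctree -> Prop.
Hypothesis H : forall c ts, List.Forall P ts -> P (Node c ts).
Fixpoint ctree_indF (t : ctree) : P t :=
  match t with Node c ts => H c ((fix G l : List.Forall P l :=
     match l with nil => List.Forall_nil _
     | cons a l' => @List.Forall_cons _ P a l' (ctree_indF a) (G l') end) ts) end.
End Ind.

Fixpoint enc (t : ctree) : GenTree.tree nat :=
  let: Node c ts := t in GenTree.Node c (map enc ts).
Fixpoint dec (t : GenTree.tree nat) : ctree :=
  match t with GenTree.Leaf _ => leaf0 | GenTree.Node c ts => Node c (map dec ts) end.
Lemma encK : cancel enc dec.
Proof.
elim/ctree_indF => c ts IH /=; congr Node.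
elim: IH => //= a l Ha _ ->; by rewrite Ha.
Qed.
HB.instance Definition _ := Equality.copy ctree (can_type encK).

Lemma ctree_ind2 (P : ctree -> Prop) :
  (forall c ts, (forall s, s \in ts -> P s) -> P (Node c ts)) -> forall t, P t.
Proof.
move=> H; elim/ctree_indF => c ts IH; apply: H.
elim: IH => //= a l Ha _ IH s; rewrite in_cons => /orP[/eqP -> //|]; exact: IH.
Qed.

Lemma lexlt_irr x : lexlt x x = false.
Proof. by elim: x => //= a x IH; rewrite eqxx. Qed.

Lemma lexlt_trans x y z : lexlt x y -> lexlt y z -> lexlt x z.
Proof.
elim: x y z => [|a x IH] [|b y] [|c z] //=.
do 3 (case: eqP => [?|?]); subst => //=; try exact: IH; lia.
Qed.

Lemma lexlt_asym x y : lexlt x y -> lexlt y x = false.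
Proof.
move=> h; apply/negbTE/negP => h'; by have := lexlt_trans h h'; rewrite lexlt_irr.
Qed.

Lemma lexlt_total x y : size x = size y -> x != y -> lexlt x y || lexlt y x.
Proof.
elim: x y => [|a x IH] [|b y] //= [] hs.
rewrite eqseq_cons; case: eqP => [->|ab] /=; rewrite ?eqxx.
- exact: IH.
- case: eqP => [ba|_]; first by case: ab.
  move=> _; lia.
Qed.

Lemma precr_lexlt x y : size x = size y -> precr x y = lexlt y x.
Proof.
elim: x y => [|a x IH] [|b y] //= [] hs.
by rewrite eq_sym; case: eqP => // _; exact: IH.
Qed.

Lemma precr_cat_lt x z s : size x = size z -> lexlt z x -> precr (x ++ s) z.
Proof.
elim: x z => [|a x IH] [|b z] //= [] hs.
by rewrite eq_sym; case: eqP => // _; exact: IH.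
Qed.

Lemma precr_cat_gt x z s : size x = size z -> lexlt x z -> precr (x ++ s) z = false.
Proof.
elim: x z => [|a x IH] [|b z] //= [] hs.
case: eqP => [_|ab]; first exact: IH.
by move=> h; apply/negbTE; rewrite -leqNgt ltnW.
Qed.

Lemma precr_prefix x s : s != [::] -> precr (x ++ s) x.
Proof.
move=> hs; elim: x => [|a x IH] /=; first by case: s hs.
by rewrite eqxx.
Qed.

Lemma precr_asym x y : precr x y -> precr y x = false.
Proof.
elim: x y => [|a x IH] [|b y] //=.
case: eqP => [->|ab]; rewrite ?eqxx; first exact: IH.
case: eqP => [ba|_]; first by case: ab.
move=> h; apply/negbTE; rewrite -leqNgt ltnW //.
Qed.

Lemma precr_irr x : precr x x = false.
Proof. by apply/negbTE/negP => h; have := precr_asym h; rewrite h. Qed.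

Lemma precr_trans x y z : precr x y -> precr y z -> precr x z.
Proof.
elim: x y z => [|a x IH] [|b y] [|c z] //=.
do 3 (case: eqP => [?|?]); subst => //=; try exact: IH; lia.
Qed.

Lemma precr_total x y : x != y -> precr x y || precr y x.
Proof.
elim: x y => [|a x IH] [|b y] //=.
rewrite eqseq_cons; case: eqP => [->|ab] /=; rewrite ?eqxx.
- exact: IH.
- case: eqP => [ba|_]; first by case: ab.
  move=> _; lia.
Qed.

Lemma prle_trans : transitive prle.
Proof.
move=> y x z; rewrite /prle => /orP[/eqP->//|h1] /orP[/eqP<-|h2]; first by rewrite h1 orbT.
by rewrite (precr_trans h1 h2) orbT.
Qed.
Lemma prle_anti : antisymmetric prle.
Proof.
move=> x y; rewrite /prle; case: eqP => // ne /= /andP[h1]; rewrite (precr_asym h1) orbF => /eqP e; by case: ne.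
Qed.
Lemma prle_total : total prle.
Proof.
move=> x y; rewrite /prle; case: (eqVneq x y) => [->//|h] /=; exact: precr_total.
Qed.

Lemma ll_irr x : ll x x = false.
Proof. by rewrite /ll ltnn eqxx lexlt_irr. Qed.

Lemma ll_trans x y z : ll x y -> ll y z -> ll x z.
Proof.
rewrite /ll => /orP[h1|/andP[/eqP e1 h1]] /orP[h2|/andP[/eqP e2 h2]].
- by rewrite (ltn_trans h2 h1).
- by rewrite -e2 h1.
- by rewrite e1 h2.
- by rewrite e1 e2 eqxx (lexlt_trans h1 h2) orbT.
Qed.

Lemma ll_asym x y : ll x y -> ll y x = false.
Proof. by move=> h; apply/negbTE/negP=> h'; have := ll_trans h h'; rewrite ll_irr. Qed.

Lemma lle_trans : transitive lle.
Proof.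
move=> y x z; rewrite /lle => /orP[/eqP->//|h1] /orP[/eqP<-|h2]; first by rewrite h1 orbT.
by rewrite (ll_trans h1 h2) orbT.
Qed.
Lemma lle_anti : antisymmetric lle.
Proof.
move=> x y; rewrite /lle; case: eqP => // ne /= /andP[h1]; rewrite (ll_asym h1) orbF => /eqP e; by case: ne.
Qed.
Lemma lle_total : total lle.
Proof.
move=> x y; rewrite /lle; case: (eqVneq x y) => [->//|h] /=; rewrite /ll.
case: (ltngtP (size x) (size y)) => //= e; rewrite ?e ?eqxx /= ?orbF; exact: lexlt_total.
Qed.

Lemma subtree_rcons t x i : subtree t (rcons x i) =
  if subtree t x is Some s then (if i < size (kids s) then Some (nth leaf0 (kids s) i) else None) else None.
Proof. elim: x t => [|a x IH] t /=; first by case: t. case: ifP => // _; exact: IH. Qed.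

Lemma is_vertex_rcons t x i : is_vertex t (rcons x i) = is_vertex t x && (i < nchildren t x).
Proof. rewrite /is_vertex /nchildren subtree_rcons; case: (subtree t x) => // s; by case: ifP. Qed.

Lemma foldr_max_ge (l : seq nat) x : x \in l -> x <= foldr maxn 0 l.
Proof.
elim: l => //= a l IH; rewrite in_cons => /orP[/eqP->|h]; first exact: leq_maxl.
exact: leq_trans (IH h) (leq_maxr _ _).
Qed.

Lemma vertex_size t p : is_vertex t p -> size p <= height t.
Proof.
elim/ctree_ind2: t p => c ts IH [|i q] //.
rewrite /is_vertex /=; case: ifP => // hi hv.
have hin : nth leaf0 ts i \in ts by exact: mem_nth.
have := IH _ hin q; rewrite /is_vertex hv => /(_ isT) h.
have hm : height (nth leaf0 ts i) <= foldr maxn 0 (map height ts).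
  by apply: foldr_max_ge; exact: map_f.
case: ts hi IH hin h hv hm => // s l hi IH hin h hv hm.
simpl; rewrite ltnS; exact: leq_trans h hm.
Qed.

Lemma nondeg_size t x : is_nondeg t x -> size x < height t.
Proof.
case/andP => hv hn; have : is_vertex t (rcons x 0) by rewrite is_vertex_rcons hv; lia.
by move/vertex_size; rewrite size_rcons.
Qed.

Definition coin t := forall x y, is_nondeg t x -> is_nondeg t y -> (ll x y <-> precr x y).

Lemma A1 t : coin t -> tsimple t.
Proof.
move=> H x y hx hy e; apply/eqP/negPn/negP => ne.
case/orP: (lexlt_total e ne) => h.
- have : ll x y by rewrite /ll e eqxx h orbT.
  by move/(H x y hx hy); rewrite precr_lexlt // (lexlt_asym h).
- have : ll y x by rewrite /ll e eqxx h orbT.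
  by move/(H y x hy hx); rewrite precr_lexlt // (lexlt_asym h).
Qed.

Lemma A2 t : tproper t -> coin t -> order_reduced t.
Proof.
move=> Hp H x [hx [x' [i [ex [hu [_ hz]]]]]].
have sx : size x = (size x').+1 by rewrite ex size_rcons.
have hs : size x' < height t by have := nondeg_size hx; lia.
case: (Hp _ hs) => z [hz' sz].
have nz : x' != z.
  apply/eqP => e; move: hu hz'; rewrite e /is_unary /is_nondeg => /andP[_ /eqP ->] /andP[]//.
have lt : lexlt x' z.
  by case/orP: (lexlt_total (esym sz) nz) => // h; have := hz z hz' sz; rewrite h.
have : ll x z by rewrite /ll sz sx ltnSn.
by move/(H x z hx hz'); rewrite ex -cats1 precr_cat_gt.
Qed.

Lemma A3_step t : tproper t -> tsimple t -> order_reduced t ->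
  forall x, is_nondeg t x -> 0 < size x -> exists w, [/\ is_nondeg t w, size w = (size x).-1 & precr x w].
Proof.
move=> Hp Hs Hr x; case/lastP: x => [//|x' i] hx _.
have hvx : is_vertex t (rcons x' i) by case/andP: hx.
move: (hvx); rewrite is_vertex_rcons => /andP[hv' hi].
have hs : size x' < height t by have := nondeg_size hx; rewrite size_rcons; lia.
case: (Hp _ hs) => w [hw sw]; exists w; split => //; first by rewrite size_rcons.
case: (eqVneq w x') => [->|ne]; first by rewrite -cats1 precr_prefix.
have hu : is_unary t x'.
  rewrite /is_unary hv' /=; case: (ltngtP (nchildren t x') 1) => // h.
  - lia.
  - have : is_nondeg t x' by rewrite /is_nondeg hv'.
    by move/(Hs _ _ hw)/(_ sw) => e; rewrite e eqxx in ne.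
case: (boolP (lexlt w x')) => h; first by rewrite -cats1 precr_cat_lt.
exfalso; apply: (Hr (rcons x' i)); split => //; exists x', i; split => //; split => //; split.
- by move=> y hy sy; rewrite (Hs _ _ hy hx sy) lexlt_irr.
- by move=> z hz sz; rewrite (Hs _ _ hz hw (etrans sz (esym sw))).
Qed.

Lemma A3 t : tproper t -> tsimple t -> order_reduced t -> coin t.
Proof.
move=> Hp Hs Hr.
have K : forall d x y, is_nondeg t x -> is_nondeg t y -> size x = size y + d.+1 -> precr x y.
  elim => [|d IH] x y hx hy e.
  - have [w [hw sw pw]] := A3_step Hp Hs Hr hx (ltac:(lia)).
    by rewrite -(Hs _ _ hw hy (ltac:(lia))).
  - have [w [hw sw pw]] := A3_step Hp Hs Hr hx (ltac:(lia)).
    apply: precr_trans pw (IH w y hw hy (ltac:(lia))).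
move=> x y hx hy; case: (ltngtP (size x) (size y)) => e.
- have p : precr y x by apply: (K (size y - size x).-1) => //; lia.
  rewrite /ll (precr_asym p); have -> : (size y < size x) = false by lia.
  by have -> : (size x == size y) = false by lia.
- have p : precr x y by apply: (K (size x - size y).-1) => //; lia.
  by rewrite p /ll e.
- by rewrite (Hs _ _ hx hy e) ll_irr precr_irr.
Qed.

Definition vaux := fix aux (i : nat) (l : seq ctree) : seq (seq nat) :=
  match l with
  | [::] => [::]
  | s :: l' => map (cons i) (verts s) ++ aux i.+1 l'
  end.
Lemma verts_node c ts : verts (Node c ts) = [::] :: vaux 0 ts.
Proof. by []. Qed.

Lemma mem_map_cons i (X : seq (seq nat)) p :
  (p \in map (cons i) X) = if p is k :: q then (k == i) && (q \in X) else false.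
Proof.
case: p => [|k q]; first by apply/mapP => [[y _]].
apply/mapP/andP => [[y hy [-> ->]]|[/eqP -> hq]]; [by rewrite eqxx|by exists q].
Qed.

Lemma vaux_head i l p : p \in vaux i l -> exists k q, p = k :: q /\ i <= k.
Proof.
elim: l i => //= s l IH i; rewrite mem_cat mem_map_cons => /orP[|/IH[k [q [-> h]]]].
- by clear IH; case: p => // k q /andP[/eqP -> _]; exists i, q.
- by exists k, q; split => //; lia.
Qed.

Lemma mem_vaux i l p : (forall s, s \in l -> forall q, (q \in verts s) = is_vertex s q) ->
  (p \in vaux i l) = if p is k :: q then (i <= k) && (k - i < size l) && is_vertex (nth leaf0 l (k - i)) q else false.
Proof.
elim: l i p => [|s l IH] i p H /=; first by case: p => // k q; rewrite andbF andFb.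
rewrite mem_cat mem_map_cons IH; last by move=> s' hs'; apply: H; rewrite in_cons hs' orbT.
case: p => // k q; case: (ltngtP k i) => h.
- by [].
- have -> : k - i = (k - i.+1).+1 by lia.
  by rewrite /= ltnS.
- subst k; rewrite subnn /= orbF; apply: H; exact: mem_head.
Qed.

Lemma mem_verts t p : (p \in verts t) = is_vertex t p.
Proof.
elim/ctree_ind2: t p => c ts IH [|k q]; rewrite verts_node in_cons //=.
rewrite (mem_vaux _ _ IH) subn0 /=.
by rewrite /is_vertex /=; case: ifP.
Qed.

Lemma uniq_vaux i l : (forall s, s \in l -> uniq (verts s)) -> uniq (vaux i l).
Proof.
elim: l i => //= s l IH i H; rewrite cat_uniq IH ?andbT; last by move=> s' h; apply: H; rewrite in_cons h orbT.
rewrite map_inj_uniq ?H ?mem_head //=; last by move=> x y [].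
apply/hasPn => p /vaux_head [k [q [-> hk]]]; rewrite mem_map_cons; lia.
Qed.

Lemma uniq_verts t : uniq (verts t).
Proof.
elim/ctree_ind2: t => c ts IH; rewrite verts_node /= uniq_vaux // andbT.
by apply/negP => /vaux_head [k [q []]].
Qed.

(* right-to-left post-order list of non-degenerate vertices *)
Fixpoint raux (i : nat) (L : seq (seq (seq nat))) : seq (seq nat) :=
  match L with [::] => [::] | A :: L' => raux i.+1 L' ++ map (cons i) A end.

Fixpoint PO (t : ctree) : seq (seq nat) :=
  let: Node c ts := t in raux 0 (map PO ts) ++ (if 2 <= size ts then [:: [::]] else [::]).

Lemma PO_node c ts : PO (Node c ts) = raux 0 (map PO ts) ++ (if 2 <= size ts then [:: [::]] else [::]).
Proof. by []. Qed.

Lemma raux_head i L p : p \in raux i L -> exists k q, p = k :: q /\ i <= k.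
Proof.
elim: L i => //= s l IH i; rewrite mem_cat mem_map_cons => /orP[/IH[k [q [-> h]]]|].
- by exists k, q; split => //; lia.
- by clear IH; case: p => // k q /andP[/eqP -> _]; exists i, q.
Qed.

Lemma mem_raux i L p : (p \in raux i L) =
  if p is k :: q then (i <= k) && (k - i < size L) && (q \in nth [::] L (k - i)) else false.
Proof.
elim: L i p => [|s l IH] i p /=; first by case: p => // k q; rewrite andbF andFb.
rewrite mem_cat mem_map_cons IH.
case: p => // k q; case: (ltngtP k i) => h.
- by [].
- have -> : k - i = (k - i.+1).+1 by lia.
  by rewrite /= ltnS ?orbF.
- by subst k; rewrite subnn /= ?orbF.
Qed.

Lemma uniq_raux i L : all uniq L -> uniq (raux i L).
Proof.
elim: L i => //= s l IH i /andP[us ul]; rewrite cat_uniq IH //= map_inj_uniq //; last by move=> x y [].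
rewrite us andbT; apply/hasPn => p; rewrite mem_map_cons; case: p => // k q /andP[/eqP -> _].
by apply/negP => /raux_head [k' [q' [[<- _]]]]; rewrite ltnn.
Qed.

Lemma pairwise_raux i L : all (pairwise precr) L -> pairwise precr (raux i L).
Proof.
elim: L i => //= s l IH i /andP[ps pl]; rewrite pairwise_cat IH // pairwise_map.
have -> : pairwise (relpre (cons i) precr) s by move: ps; apply: sub_pairwise => x y /=; rewrite eqxx.
rewrite !andbT; apply/allrelP => p q /raux_head [k [p' [-> hk]]].
rewrite mem_map_cons; case: q => // k' q' /andP[/eqP -> _] /=.
by have -> : (k == i) = false by lia.
Qed.

Lemma size_raux i L : size (raux i L) = sumn (map size L).
Proof. elim: L i => //= s l IH i; by rewrite size_cat IH size_map addnC. Qed.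

Lemma msize_raux i L : map size (raux i L) =
  rev (flatten (map (fun A => rev (map succn (map size A))) L)).
Proof.
elim: L i => //= s l IH i; rewrite map_cat IH rev_cat revK; congr (_ ++ _).
by rewrite -!map_comp.
Qed.

Lemma mem_PO t p : (p \in PO t) = is_nondeg t p.
Proof.
elim/ctree_ind2: t p => c ts IH p; rewrite PO_node mem_cat mem_raux.
case: p => [|k q] /=; first by case: ifP.
have -> : (k :: q \in (if 1 < size ts then [:: [::]] else [::])) = false by case: ifP.
rewrite subn0 size_map orbF; case hk: (k < size ts) => /=.
  by rewrite (nth_map leaf0 [::]) // (IH _ (mem_nth leaf0 hk)) /is_nondeg /is_vertex /nchildren /= hk.
by rewrite /is_nondeg /is_vertex /= hk.
Qed.

Lemma uniq_PO t : uniq (PO t).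
Proof.
elim/ctree_ind2: t => c ts IH; rewrite PO_node cat_uniq uniq_raux; last first.
  by apply/allP => A /mapP [s hs ->]; exact: IH.
case: ifP => _ //=; rewrite orbF andbT; apply/negP => /raux_head [k [q []]] //.
Qed.

Lemma pairwise_PO t : pairwise precr (PO t).
Proof.
elim/ctree_ind2: t => c ts IH; rewrite PO_node pairwise_cat pairwise_raux; last first.
  by apply/allP => A /mapP [s hs ->]; exact: IH.
case: ifP => _ //=; rewrite ?allrel0r // andbT; apply/allrelP => p q /raux_head [k [p' [-> _]]].
by rewrite inE => /eqP ->.
Qed.

Lemma sorted_PO t : sorted prle (PO t).
Proof.
rewrite sorted_pairwise; last exact: prle_trans.
by apply: sub_pairwise (pairwise_PO t) => x y h; rewrite /prle h orbT.
Qed.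

Lemma perm_PO t : perm_eq [seq p <- verts t | is_nondeg t p] (PO t).
Proof.
apply: uniq_perm; [by rewrite filter_uniq // uniq_verts | exact: uniq_PO|].
move=> p; rewrite mem_filter mem_verts mem_PO; apply/andP/idP => [[]//|h]; split => //.
by case/andP: h.
Qed.

Lemma PO_sort t : sort prle [seq p <- verts t | is_nondeg t p] = PO t.
Proof.
apply: (sorted_eq prle_trans prle_anti); [exact: (sort_sorted prle_total) | exact: sorted_PO |].
by rewrite perm_sort perm_PO.
Qed.

Lemma reduced_nch t p : treduced t -> is_vertex t p -> nchildren t p != 1.
Proof.
elim/ctree_ind2: t p => c ts IH [|k q] /= /andP[h1 h2] //.
rewrite /is_vertex /nchildren /=; case: ifP => // hk.
apply: IH; first exact: mem_nth. by move/allP: h2; apply; exact: mem_nth.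
Qed.

Lemma reduced_filter t : treduced t ->
  [seq p <- verts t | is_nonleaf t p] = [seq p <- verts t | is_nondeg t p].
Proof.
move=> hr; apply: eq_in_filter => p; rewrite mem_verts => hv.
rewrite /is_nonleaf /is_nondeg hv /=; have := reduced_nch hr hv; lia.
Qed.

Lemma rho_node c ts : size ts != 1 -> rho (Node c ts) = Node c (map rho ts).
Proof. by case: ts => [|s [|s' l]]. Qed.

Lemma rc_rho N t : wf_colors N t -> root_color (rho t) = root_color t.
Proof.
elim/ctree_ind2: t => c ts IH /= /and3P[_ h1 h2].
case: ts IH h1 h2 => [|s [|s' l]] //= IH /eqP <- /andP[hs _]; exact: IH (mem_head _ _) hs.
Qed.

Lemma wf_rho N t : wf_colors N t -> wf_colors N (rho t).
Proof.
elim/ctree_ind2: t => c ts IH /and3P[hc h1 h2].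
case: (eqVneq (size ts) 1) => e.
  case: ts e IH h1 h2 => [|s [|]] //= _ IH _ /andP[hs _]; exact: IH (mem_head _ _) hs.
rewrite rho_node //= hc /=; apply/andP; split.
  by case: ts e IH h1 h2 => [|s [|s' l]].
apply/allP => s' /mapP [s hs ->]; exact: (IH s hs (allP h2 s hs)).
Qed.

Lemma reduced_rho t : treduced (rho t).
Proof.
elim/ctree_ind2: t => c ts IH.
case: (eqVneq (size ts) 1) => e.
  case: ts e IH => [|s [|]] //= _ IH; exact: IH (mem_head _ _).
rewrite rho_node //= size_map e /=; apply/allP => s' /mapP [s hs ->]; exact: IH.
Qed.

Lemma leaves_rho t : leaves_word (rho t) = leaves_word t.
Proof.
elim/ctree_ind2: t => c ts IH.
case: (eqVneq (size ts) 1) => e.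
  case: ts e IH => [|s [|]] //= _ IH; rewrite cats0; exact: IH (mem_head _ _).
rewrite rho_node //=; case: ts e IH => [|s l] //= _ IH; congr (_ ++ _); first exact: IH (mem_head _ _).
congr flatten; rewrite -map_comp; apply/eq_in_map => s' hs' /=; apply: IH; by rewrite in_cons hs' orbT.
Qed.

Lemma size_PO_node c ts : size (PO (Node c ts)) = sumn (map (fun s => size (PO s)) ts) + (1 < size ts).
Proof. by rewrite PO_node size_cat size_raux -map_comp; case: ifP. Qed.

Lemma size_PO_rho t : size (PO (rho t)) = size (PO t).
Proof.
elim/ctree_ind2: t => c ts IH.
case: (eqVneq (size ts) 1) => e.
  case: ts e IH => [|s [|]] // _ IH.
  have -> : rho (Node c [:: s]) = rho s by [].
  rewrite (IH _ (mem_head _ _)) size_PO_node /=; lia.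
rewrite rho_node // !size_PO_node size_map -map_comp; congr (_ + _); congr sumn.
by apply/eq_in_map => s hs /=; exact: IH.
Qed.

Import GRing.Theory.

Lemma is_leaf_cons c ts k q : is_leaf (Node c ts) (k :: q) = (k < size ts) && is_leaf (nth leaf0 ts k) q.
Proof. by rewrite /is_leaf /is_vertex /nchildren /=; case: ifP. Qed.

Section Prod.
Variable R : pzRingType.
Variable Y : nat -> seq nat -> R.
Local Open Scope ring_scope.
Definition Qp t := \prod_(x <- PO t) Yvert Y t x.
Fixpoint RQ (l : seq ctree) : R := if l is s :: l' then RQ l' * Qp s else 1.

Lemma Yvert_cons c ts i x : (i < size ts)%N -> Yvert Y (Node c ts) (i :: x) = Yvert Y (nth leaf0 ts i) x.
Proof. by move=> hi; rewrite /Yvert /= hi. Qed.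

Lemma prod_raux c ts i l : drop i ts = l ->
  \prod_(x <- raux i (map PO l)) Yvert Y (Node c ts) x = RQ l.
Proof.
elim: l i => [|s l IH] i hd /=; first by rewrite big_nil.
have hi : (i < size ts)%N.
  rewrite ltnNge; apply/negP => h; move: hd; by rewrite drop_oversize.
move: hd; rewrite (drop_nth leaf0 hi) => [[hs hd]].
rewrite big_cat (IH _ hd) big_map /Qp; congr (_ * _); apply: eq_bigr => x _.
by rewrite Yvert_cons // hs.
Qed.

Lemma Qp_node c ts : Qp (Node c ts) =
  RQ ts * (if (1 < size ts)%N then Ysym Y c (map root_color ts) else 1).
Proof.
rewrite {1}/Qp PO_node big_cat /= (prod_raux c (drop0 ts)); congr (_ * _).
case: ifP => _; [by rewrite big_seq1 | by rewrite big_nil].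
Qed.

Lemma RQ_rho l : (forall s, s \in l -> Qp (rho s) = Qp s) -> RQ (map rho l) = RQ l.
Proof.
elim: l => //= s l IH H; rewrite IH ?H ?mem_head // => s' hs'; apply: H; by rewrite in_cons hs' orbT.
Qed.

Lemma Q_rho N t : wf_colors N t -> Qp (rho t) = Qp t.
Proof.
elim/ctree_ind2: t => c ts IH /and3P[hc h1 h2].
case: (eqVneq (size ts) 1) => e.
  case: ts e IH h1 h2 => [|s [|]] // _ IH _ /andP[hs _].
  have -> : rho (Node c [:: s]) = rho s by [].
  by rewrite (IH _ (mem_head _ _) hs) Qp_node /= mul1r mulr1.
rewrite rho_node // !Qp_node size_map; congr (_ * _).
  by apply: RQ_rho => s hs; exact: (IH s hs (allP h2 s hs)).
case: ifP => // _; rewrite -map_comp; congr Ysym; apply/eq_in_map => s hs /=.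
exact: rc_rho (allP h2 s hs).
Qed.
End Prod.

Fixpoint lay (t : ctree) (r : nat) : bool :=
  let: Node _ ts := t in if ts is [::] then r == 0 else (0 < r) && all (fun s => lay s r.-1) ts.

Lemma lay_node c ts r : ts != [::] -> lay (Node c ts) r = (0 < r) && all (fun s => lay s r.-1) ts.
Proof. by case: ts. Qed.

Lemma lay_leaf t r p : lay t r -> is_leaf t p -> size p = r.
Proof.
elim/ctree_ind2: t r p => c ts IH r [|k q].
- by case: ts IH => [|s l] IH /= => [/eqP ->|] //; rewrite /is_leaf /is_vertex /nchildren.
- rewrite is_leaf_cons => hl /andP[hk hq].
  have ne : ts != [::] by case: ts hk {IH hl hq}.
  move: hl; rewrite lay_node // => /andP[hr /allP ha].
  have := IH _ (mem_nth leaf0 hk) r.-1 q (ha _ (mem_nth leaf0 hk)) hq; rewrite /=; lia.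
Qed.

Lemma foldr_max_const (l : seq nat) m : l != [::] -> all (fun x => x == m) l -> foldr maxn 0 l = m.
Proof.
elim: l => //= a [|b l] IH _ /andP[/eqP -> h]; first by rewrite maxn0.
by rewrite IH // maxnn.
Qed.

Lemma height_node c ts : ts != [::] -> height (Node c ts) = (foldr maxn 0 (map height ts)).+1.
Proof. by case: ts. Qed.

Lemma lay_height t r : lay t r -> height t = r.
Proof.
elim/ctree_ind2: t r => c ts IH r; case: (eqVneq ts [::]) => e.
  by subst ts => /= /eqP.
rewrite lay_node // height_node // => /andP[hr ha]; rewrite (@foldr_max_const _ r.-1); first lia.
  by case: ts e {IH ha}.
apply/allP => n /mapP [s' hs' ->]; apply/eqP; apply: IH => //; exact: (allP ha).
Qed.

Lemma exists_leaf t : exists p, is_leaf t p.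
Proof.
elim/ctree_ind2: t => c ts IH; case: ts IH => [|s l] IH; first by exists [::].
have [q hq] := IH s (mem_head _ _); exists (0 :: q); by rewrite is_leaf_cons.
Qed.

Lemma Tlay t r : (forall p, is_leaf t p -> size p = r) -> lay t r.
Proof.
elim/ctree_ind2: t r => c ts IH r H.
case: ts IH H => [|s l] IH H; first by rewrite /= -(H [::]).
rewrite lay_node //; apply/andP; split.
  have [q hq] := exists_leaf s; have := H (0 :: q); rewrite is_leaf_cons /= => /(_ hq); lia.
apply/allP => s' hs'; apply: IH => // q hq.
have := H (index s' (s :: l) :: q); rewrite is_leaf_cons index_mem hs' nth_index // => /(_ hq) /=; lia.
Qed.

Lemma msize_PO_node c ts : map size (PO (Node c ts)) =
  rev (flatten (map (fun s => rev (map succn (map size (PO s)))) ts)) ++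
  (if 1 < size ts then [:: 0] else [::]).
Proof. rewrite PO_node map_cat msize_raux -map_comp; by case: ifP. Qed.

Lemma zero_msize c ts : (0 \in map size (PO (Node c ts))) = (1 < size ts).
Proof.
rewrite msize_PO_node mem_cat mem_rev.
have -> : (0 \in flatten (map (fun s => rev (map succn (map size (PO s)))) ts)) = false.
  apply/negP => /flattenP [A /mapP [s _ ->]]; by rewrite mem_rev => /mapP [n _].
by case: ifP.
Qed.

Lemma det N t1 t2 r : wf_colors N t1 -> wf_colors N t2 -> lay t1 r -> lay t2 r ->
  rho t1 = rho t2 -> map size (PO t1) = map size (PO t2) -> t1 = t2.
Proof.
elim/ctree_ind2: t1 t2 r => c1 ts1 IH [c2 ts2] r w1 w2 l1 l2 hr hp.
case: (eqVneq ts1 [::]) => e1.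
  subst ts1; move: l1 => /= /eqP r0; subst r.
  case: ts2 l2 hr {w2 hp} => [|s l] //= _ [->] //.
case: (eqVneq ts2 [::]) => e2.
  subst ts2; move: l2 => /= /eqP r0; subst r.
  by move: l1; rewrite lay_node.
move: l1 l2; rewrite !lay_node // => /andP[hr1 /allP a1] /andP[_ /allP a2].
case/and3P: w1 => _ u1 /allP b1; case/and3P: w2 => _ u2 /allP b2.
have Z : (1 < size ts1) = (1 < size ts2) by rewrite -(zero_msize c1) -(zero_msize c2) hp.
case: (ltnP 1 (size ts1)) => h1.
- have h2 : 1 < size ts2 by rewrite -Z.
  have n1 : size ts1 != 1 by rewrite gtn_eqF.
  have n2 : size ts2 != 1 by rewrite gtn_eqF.
  move: hr; rewrite !rho_node // => -[ec hm]; subst c2.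
  have hs : size ts1 = size ts2 by rewrite -(size_map rho ts1) hm size_map.
  move: hp; rewrite !msize_PO_node h1 h2 !cats1 => /rcons_inj [] /(congr1 rev); rewrite !revK => hF.
  set f := fun s => rev (map succn (map size (PO s))).
  have hsh : shape (map f ts1) = shape (map f ts2).
    rewrite /shape -!map_comp.
    have -> : map (size \o f) ts1 = map (fun s => size (PO s)) (map rho ts1).
      by rewrite -map_comp; apply/eq_map => s /=; rewrite /f size_rev !size_map size_PO_rho.
    rewrite hm -map_comp; apply/eq_map => s /=; by rewrite /f size_rev !size_map size_PO_rho.
  have hmf : map f ts1 = map f ts2 by rewrite -(flattenK (map f ts1)) hsh hF flattenK.
  congr Node; apply: (eq_from_nth (x0 := leaf0) hs) => k hk.
  have hk2 : k < size ts2 by rewrite -hs.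
  apply: (IH _ (mem_nth leaf0 hk) _ r.-1).
  + exact: b1 (mem_nth leaf0 hk).
  + exact: b2 (mem_nth leaf0 hk2).
  + exact: a1 (mem_nth leaf0 hk).
  + exact: a2 (mem_nth leaf0 hk2).
  + by rewrite -!(nth_map leaf0 leaf0 rho) // hm.
  + have := congr1 (fun L => nth [::] L k) hmf; rewrite /= !(nth_map leaf0) // /f.
    by move/(congr1 rev); rewrite !revK => /(inj_map succn_inj).
- have h2 : size ts2 <= 1 by rewrite leqNgt -Z -leqNgt.
  case: ts1 e1 h1 IH a1 b1 u1 hr hp {Z} => [|s1 [|]] // _ _ IH a1 b1 u1.
  case: ts2 e2 h2 a2 b2 u2 => [|s2 [|]] // _ _ a2 b2 u2 hr hp.
  move: hr; rewrite /= => hr.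
  move: hp; rewrite !msize_PO_node /= !cats0 !revK => /(inj_map succn_inj) hp.
  have es := IH s1 (mem_head _ _) s2 r.-1 (b1 _ (mem_head _ _)) (b2 _ (mem_head _ _))
    (a1 _ (mem_head _ _)) (a2 _ (mem_head _ _)) hr hp.
  subst s2; move/eqP: u1 => <-; by move/eqP: u2 => <-.
Qed.

Lemma OST_PO t : tproper t -> tsimple t -> coin t ->
  map size (PO t) = rev (iota 0 (height t)).
Proof.
move=> Hp Hs Hc.
suff E : rev (map size (PO t)) = iota 0 (height t) by rewrite -E revK.
apply: (irr_sorted_eq ltn_trans ltnn); last 2 first.
- exact: iota_ltn_sorted.
- move=> k; rewrite mem_rev mem_iota add0n /=; apply/mapP/idP => [[x hx ->]|hk].
    by rewrite mem_PO in hx; exact: nondeg_size.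
  have [p [hp <-]] := Hp k hk; exists p => //; by rewrite mem_PO.
rewrite rev_sorted sorted_pairwise; last by move=> ? ? ? h1 h2; exact: ltn_trans h2 h1.
rewrite pairwise_map; apply: (sub_in_pairwise _ (allss (PO t)) (pairwise_PO t)).
move=> x y hx hy /= hp; rewrite mem_PO in hx; rewrite mem_PO in hy.
move: hp => /(Hc x y hx hy) /orP[//|/andP[/eqP e h]].
by rewrite (Hs _ _ hx hy e) lexlt_irr in h.
Qed.

Lemma coin_of_PO t h : map size (PO t) = rev (iota 0 h) -> coin t.
Proof.
move=> E x y hx hy; rewrite -mem_PO in hx; rewrite -mem_PO in hy.
have sz : size (PO t) = h by rewrite -(size_map size) E size_rev size_iota.
have sn : forall z, z \in PO t -> size z = h - (index z (PO t)).+1.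
  move=> z hz; have hi : index z (PO t) < size (PO t) by rewrite index_mem.
  rewrite -{1}(nth_index [::] hz) -(nth_map [::] 0) // E nth_rev ?size_iota -?sz //.
  by rewrite nth_iota // sz; lia.
have /(pairwiseP [::]) P := pairwise_PO t.
have hi : index x (PO t) < size (PO t) by rewrite index_mem.
have hj : index y (PO t) < size (PO t) by rewrite index_mem.
case: (ltngtP (index x (PO t)) (index y (PO t))) => hij.
- have p := P _ _ hi hj hij; rewrite !nth_index // in p.
  rewrite p /ll (sn _ hx) (sn _ hy); have -> : h - (index y (PO t)).+1 < h - (index x (PO t)).+1 by lia.
  by [].
- have p := P _ _ hj hi hij; rewrite !nth_index // in p.
  rewrite (precr_asym p) /ll (sn _ hx) (sn _ hy).
  have -> : h - (index y (PO t)).+1 < h - (index x (PO t)).+1 = false by lia.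
  by have -> : (h - (index x (PO t)).+1 == h - (index y (PO t)).+1) = false by lia.
- have e : x = y by rewrite -(nth_index [::] hx) -(nth_index [::] hy) hij.
  by rewrite e ll_irr precr_irr.
Qed.

Lemma sort_lle_PO t h : map size (PO t) = rev (iota 0 h) ->
  sort lle [seq p <- verts t | is_nondeg t p] = PO t.
Proof.
move=> E; apply: (sorted_eq lle_trans lle_anti); [exact: (sort_sorted lle_total) | |].
- have : sorted (fun a b => b < a) (map size (PO t)) by rewrite E rev_sorted iota_ltn_sorted.
  rewrite sorted_map; apply: sub_sorted => x y /= h1; by rewrite /lle /ll h1 orbT.
- by rewrite perm_sort perm_PO.
Qed.

Fixpoint pad (n : nat) (t : ctree) : ctree :=
  if n is n'.+1 then Node (root_color t) [:: pad n' t] else t.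
Definition nv t := size (PO t).

Fixpoint g (t : ctree) (r : nat) {struct t} : ctree :=
  let: Node c ts := t in
  if ts is [::] then pad r (Node c [::]) else
  Node c ((fix aux (S : nat) (l : seq ctree) : seq ctree :=
     match l with [::] => [::] | s :: l' => pad S (g s (r.-1 - S)) :: aux (S + nv s) l' end) 0 ts).

Definition gaux r := fix aux (S : nat) (l : seq ctree) : seq ctree :=
  match l with [::] => [::] | s :: l' => pad S (g s (r.-1 - S)) :: aux (S + nv s) l' end.

Lemma g_node c ts r : ts != [::] -> g (Node c ts) r = Node c (gaux r 0 ts).
Proof. by case: ts. Qed.

Lemma size_gaux r S l : size (gaux r S l) = size l.
Proof. by elim: l S => //= s l IH S; rewrite IH. Qed.

Lemma rc_pad n x : root_color (pad n x) = root_color x.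
Proof. by case: n. Qed.

Lemma rho_pad n x : rho (pad n x) = rho x.
Proof. by elim: n => //= n IH. Qed.

Lemma wf_rc N x : wf_colors N x -> 0 < root_color x <= N.
Proof. by case: x => c ts /and3P[]. Qed.

Lemma wf_pad N n x : wf_colors N x -> wf_colors N (pad n x).
Proof.
move=> hx; elim: n => //= n IH; rewrite wf_rc //= rc_pad eqxx /= IH //.
Qed.

Lemma lw_pad n x : leaves_word (pad n x) = leaves_word x.
Proof. by elim: n => //= n IH; rewrite cats0. Qed.

Lemma lay_pad n x r : lay x r -> lay (pad n x) (n + r).
Proof. by move=> h; elim: n => //= n ->. Qed.

Lemma msize_pad n x : map size (PO (pad n x)) = map (addn n) (map size (PO x)).
Proof.
elim: n => [|n IH]; first by rewrite map_id_in.
have -> : pad n.+1 x = Node (root_color x) [:: pad n x] by [].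
rewrite msize_PO_node /= cats0 cats0 revK IH -!map_comp; apply/eq_map => z /=; lia.
Qed.

Lemma lw_node c ts : ts != [::] -> leaves_word (Node c ts) = flatten (map leaves_word ts).
Proof. by case: ts. Qed.

Lemma red_node c ts : treduced (Node c ts) = (size ts != 1) && all treduced ts.
Proof. by []. Qed.

Lemma gaux_rho r l : (forall s, s \in l -> forall r', rho (g s r') = s) ->
  forall S, map rho (gaux r S l) = l.
Proof.
elim: l => //= s l IHl H S; rewrite rho_pad H ?mem_head // IHl // => s' hs'.
apply: H; by rewrite in_cons hs' orbT.
Qed.

Lemma gaux_wf N r l : (forall s, s \in l -> forall r', wf_colors N (g s r')) ->
  forall S, all (wf_colors N) (gaux r S l).
Proof.
elim: l => //= s l IHl H S; rewrite wf_pad ?H ?mem_head // IHl // => s' hs'.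
apply: H; by rewrite in_cons hs' orbT.
Qed.

Lemma gaux_lw r l : (forall s, s \in l -> forall r', leaves_word (g s r') = leaves_word s) ->
  forall S, map leaves_word (gaux r S l) = map leaves_word l.
Proof.
elim: l => //= s l IHl H S; rewrite lw_pad H ?mem_head // IHl // => s' hs'.
apply: H; by rewrite in_cons hs' orbT.
Qed.

Lemma gaux_ms r l : (forall s, s \in l -> forall r', map size (PO (g s r')) = rev (iota 0 (nv s))) ->
  forall S, flatten [seq rev [seq i.+1 | i <- [seq size i | i <- PO s]] | s <- gaux r S l]
     = iota S.+1 (sumn [seq size (PO s) | s <- l]).
Proof.
elim: l => //= s l IHl H S.
rewrite IHl; last by move=> s' hs'; apply: H; rewrite in_cons hs' orbT.
rewrite msize_pad H ?mem_head // !map_rev revK -map_comp iotaD.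
have -> : S.+1 + size (PO s) = (S + nv s).+1 by rewrite /nv; lia.
congr (_ ++ _); rewrite -[in RHS](addn0 S.+1) iotaDl /nv; apply/eq_map => z /=; lia.
Qed.

Lemma gaux_lay r l : (forall s, s \in l -> forall r', nv s <= r' -> lay (g s r') r') ->
  forall S, S + sumn [seq size (PO s) | s <- l] <= r.-1 -> all (fun x => lay x r.-1) (gaux r S l).
Proof.
elim: l => //= s l IHl H S hS; apply/andP; split.
  have L : lay (g s (r.-1 - S)) (r.-1 - S) by apply: H; [exact: mem_head | rewrite /nv; lia].
  have := lay_pad S L; by have -> : S + (r.-1 - S) = r.-1 by lia.
apply: IHl; last by rewrite /nv; lia.
move=> s' hs'; apply: H; by rewrite in_cons hs' orbT.
Qed.

Lemma g_props N t : wf_colors N t -> treduced t ->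
  forall r, [/\ root_color (g t r) = root_color t, rho (g t r) = t,
    wf_colors N (g t r), leaves_word (g t r) = leaves_word t &
    map size (PO (g t r)) = rev (iota 0 (nv t))] /\ (nv t <= r -> lay (g t r) r).
Proof.
elim/ctree_ind2: t => c ts IH hw hr r.
case: (eqVneq ts [::]) => e.
  subst ts; split; first split => //=.
  - by rewrite rc_pad.
  - by rewrite rho_pad.
  - exact: wf_pad.
  - by rewrite lw_pad.
  - by rewrite msize_pad.
  - by move=> _; rewrite /= -{2}(addn0 r); apply: lay_pad.
move: (hw) (hr) => /and3P[hc _ /allP hw'] /andP[h1 /allP hr'].
have h2 : 1 < size ts by case: ts e h1 {IH hw hr hw' hr'} => [|s [|]].
have IH' := fun s hs => IH s hs (hw' s hs) (hr' s hs).
have ne : gaux r 0 ts != [::] by rewrite -size_eq0 size_gaux size_eq0.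
rewrite g_node //; split; first split => //.
- have n2 : size ts != 1 by rewrite gtn_eqF.
  rewrite rho_node ?size_gaux // gaux_rho //.
  by move=> s hs r'; have [[]] := IH' s hs r'.
- rewrite /= hc /=; apply/andP; split.
    by case: ts e h1 h2 {IH hw hr hw' hr' IH' ne} => [|s [|]].
  by apply: gaux_wf => s hs r'; have [[]] := IH' s hs r'.
- rewrite !lw_node // gaux_lw //.
  by move=> s hs r'; have [[]] := IH' s hs r'.
- rewrite msize_PO_node size_gaux h2 /nv size_PO_node h2 addn1 /= rev_cons cats1.
  congr rcons; congr rev; apply: gaux_ms.
  by move=> s hs r'; have [[]] := IH' s hs r'.
- rewrite /nv size_PO_node h2 addn1 => hn.
  rewrite lay_node //; apply/andP; split; first lia.
  apply: gaux_lay; last by rewrite add0n; lia.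
  by move=> s hs r'; have [_] := IH' s hs r'.
Qed.

Theorem theorem10 (N : nat) (hN : (1 <= N)%N) :
  (* (a) *)
  (forall T : ctree, wf_colors N T -> tlayered T -> tproper T ->
     ((forall x y, is_nondeg T x -> is_nondeg T y -> (ll x y <-> precr x y))
      <-> (tsimple T /\ order_reduced T))) /\
  (* (b) *)
  (forall (j : nat) (u : seq nat), (1 <= j <= N)%N ->
     (forall T, OST N j u T -> RT N j u (rho T)) /\
     (forall T1 T2, OST N j u T1 -> OST N j u T2 -> rho T1 = rho T2 -> T1 = T2) /\
     (forall T, RT N j u T -> exists T', OST N j u T' /\ rho T' = T)) /\
  (* (c) *)
  (forall (j : nat) (u : seq nat) (T T' : ctree), (1 <= j <= N)%N ->
     RT N j u T -> OST N j u T' -> rho T' = T ->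
     (forall (R : pzRingType) (Y : nat -> seq nat -> R),
        Omega Y T' = Lambda_r Y T) /\ nlayers T' = nvert T).
Proof.
split; [|split].
- move=> T hw hl hp; split.
  + move=> H; split; [exact: A1 H | exact: A2 hp H].
  + by case=> hs hr; exact: A3 hp hs hr.
- move=> j u hj; split; [|split].
  + move=> T [hw hrc hlw [hl hp] [hs hr]]; split.
    * exact: wf_rho hw.
    * exact: reduced_rho.
    * by rewrite (rc_rho hw).
    * by rewrite leaves_rho.
  + move=> T1 T2 [w1 _ _ [l1 p1] [s1 r1]] [w2 _ _ [l2 p2] [s2 r2]] e.
    have E1 := OST_PO p1 s1 (A3 p1 s1 r1).
    have E2 := OST_PO p2 s2 (A3 p2 s2 r2).
    have S1 : size (PO T1) = height T1 by rewrite -(size_map size) E1 size_rev size_iota.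
    have S2 : size (PO T2) = height T2 by rewrite -(size_map size) E2 size_rev size_iota.
    have hh : height T1 = height T2 by rewrite -S1 -S2 -size_PO_rho e size_PO_rho.
    apply: (det w1 w2 (r := height T1)) => //.
    * exact: Tlay l1.
    * by apply: Tlay; rewrite hh.
    * by rewrite E1 E2 hh.
  + move=> T [hw hr hrc hlw]; exists (g T (nv T)).
    have [[rc rh wf lw ms] L] := g_props hw hr (nv T).
    have Ly := L (leqnn _); have Hh := lay_height Ly.
    have hp : tproper (g T (nv T)).
      move=> k; rewrite Hh => hk.
      have : k \in map size (PO (g T (nv T))) by rewrite ms mem_rev mem_iota.
      by case/mapP => x hx ->; exists x; rewrite -mem_PO.
    have hc := coin_of_PO ms.
    split => //; split => //.
    * by rewrite rc.
    * by rewrite lw.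
    * split => // p hp'; rewrite Hh; exact: lay_leaf Ly hp'.
    * split; [exact: A1 hc | exact: A2 hp hc].
- move=> j u T T' hj [hw hr hrc hlw] [w' _ _ [l' p'] [s' r']] e.
  have E := OST_PO p' s' (A3 p' s' r').
  split.
  + move=> R Y; rewrite /Omega (sort_lle_PO E) /Lambda_r (reduced_filter hr) PO_sort -e.
    exact: (esym (Q_rho Y w')).
  + rewrite /nlayers /nvert (reduced_filter hr) (perm_size (perm_PO T)) -e size_PO_rho.
    by rewrite -(size_map size) E size_rev size_iota.
Qed.
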